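(* Let $G$, $H$, the supervisors with $\Sigma_{o,i},\Sigma_{c,i},N_{o,i}$, a controllable event $\sigma\in\Sigma_c$, $N=\max\{N_{o,i}:i\in I^c(\sigma)\}$, and the verifier $V^N_\sigma$ with reachable state set $X^N_\sigma$ be as in the context. Then the following are equivalent: (a) for every $s\in\mathcal{L}(H)$ with $|s|\ge N$, if $s\sigma\in\mathcal{L}(G)\setminus\mathcal{L}(H)$ then for every $(s_i)_{i\in I^c(\sigma)}\in\mathcal{T}^{\sigma}_{conf}(s)$ there exists $i\in I^c(\sigma)$ with $s_i\sigma\notin\mathcal{L}(H^{aug}_{N_{o,i}})$; (b) there is no state $(q,(q_i)_{i\in I^c(\sigma)},N)\in X^N_\sigma$ with $\sigma\in\Gamma(q)\setminus\Gamma_H(q)$ and $\sigma\in\Gamma^{aug}_{H,N_{o,i}}(q_i)$ for all $i\in I^c(\sigma)$.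
   Context: $G=(Q,\Sigma,\delta,\Gamma,q_0,Q_m)$ is a deterministic finite automaton (transition function extended to strings; $\Gamma(q)$ = set of events defined at $q$; $\mathcal{L}(G)$ its generated language). $H=(Q_H,\Sigma,\delta_H,\Gamma_H,q_0,Q_{m,H})$ is a sub-automaton of $G$. For a string $s$, $|s|$ is its length, $s_{-m}$ its prefix of length $\max\{0,|s|-m\}$, $\Sigma^{\le M}$ the strings of length at most $M$. Supervisors $I=\{1,\dots,n\}$: supervisor $i$ has observable events $\Sigma_{o,i}$, $\Sigma_{uo,i}=\Sigma\setminus\Sigma_{o,i}$, controllable events $\Sigma_{c,i}$, delay bound $N_{o,i}\in\mathbb{N}$; $\Sigma_c=\bigcup_i\Sigma_{c,i}$, $I^c(\sigma)=\{i:\sigma\in\Sigma_{c,i}\}$. $P_i$ is natural projection onto $\Sigma_{o,i}^*$; $\Theta_i^{N_{o,i}}(s)=\{P_i(s_{-m}):0\le m\le N_{o,i}\}$. For $s\in\mathcal{L}(H)$, $\mathcal{T}^\sigma_{conf}(s)$ is the set of tuples $(s_i)_{i\in I^c(\sigma)}$ with $P_i(s_i)\in\Theta_i^{N_{o,i}}(s)$ for all $i\in I^c(\sigma)$. Augmented automaton $H^{aug}_N$: states $Q_H\cup\{q_{dis}\}$, initial state $q_0$; for $q\in Q_H$, $e\in\Sigma$: $\delta^{aug}(q,e)=\delta_H(q,e)$ if $e\in\Gamma_H(q)$, $=q_{dis}$ if $e\notin\Gamma_H(q)$ and $e\in\Gamma_H(\delta_H(q,s'))$ for some $s'\in\Sigma^{\le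 N}$ with $\delta_H(q,s')$ defined, undefined otherwise; $q_{dis}$ has no outgoing transitions; $\Gamma^{aug}_{H,N}(q)$ is the set of events defined at $q$ in $H^{aug}_N$. Let $\Xi$ be the set of tuples $(q,(q_i)_{i\in I^c(\sigma)})$ such that there exist $t\in\mathcal{L}(H)$ with $q=\delta_H(q_0,t)$ and, for each $i\in I^c(\sigma)$, $s_i\in\mathcal{L}(H)$ with $q_i=\delta_H(q_0,s_i)$ and $P_i(s_i)=P_i(t)$. Verifier $V^N_\sigma$: states are tuples $(q,(q_i)_{i\in I^c(\sigma)},d)$ with $q,q_i\in Q_H$, $d\in[0,N]$; set of initial states $\{(q,(q_i)_i,0):(q,(q_i)_i)\in\Xi\}$. At a state $(q,(q_i)_i,d)$ and for $e\in\Sigma$, each $i\in I^c(\sigma)$ falls in one case: D1: $N-d>N_{o,i}$, $e\in\Sigma_{o,i}$; D2: $N-d>N_{o,i}$, $e\in\Sigma_{uo,i}$; D3: $N-d\le N_{o,i}$, $\sigma\notin\Gamma^{aug}_{H,N_{o,i}}(q_i)$, $e\in\Sigma_{o,i}$; D4: $N-d\le N_{o,i}$, $\sigma\notin\Gamma^{aug}_{H,N_{o,i}}(q_i)$, $e\in\Sigma_{uo,i}$; D5: $N-d\le N_{o,i}$, $\sigma\in\Gamma^{aug}_{H,N_{o,i}}(q_i)$. Type-1 transition: if $d+1\le N$, $\delta_H(q,e)$ is defined, and $\delta_H(q_i,e)$ is defined for every $i$ in case D1 or D3, there is a transition to $(\delta_H(q,e),(q_i')_i,d+1)$ with $q_i'=\delta_H(q_i,e)$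 for $i$ in D1 or D3 and $q_i'=q_i$ otherwise. Type-2 transition: for each $i$ in case D2 or D4 with $\delta_H(q_i,e)$ defined, there is a transition to the state obtained by replacing $q_i$ by $\delta_H(q_i,e)$, all other components unchanged. $X^N_\sigma$ is the set of states reachable from the initial states. *)

(* Defs.v *)
From mathcomp Require Import all_boot.
Set Implicit Arguments. Unset Strict Implicit. Unset Printing Implicit Defensive.

Inductive run (X A : Type) (R : X -> A -> X -> Prop) : X -> seq A -> X -> Prop :=
  | run_nil x : run R x [::] x
  | run_cons x a y s z : R x a y -> run R y s z -> run R x (a :: s) z.

Section Automata.
Variables (Q E : finType).

Fixpoint ext (d : Q -> E -> option Q) (q : Q) (s : seq E) : option Q :=
  match s with
  | [::] => Some q
  | e :: s' => match d q e with Some q' => ext d q' s' | None => None end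
  end.

Definition lang (d : Q -> E -> option Q) (q0 : Q) (s : seq E) : Prop :=
  ext d q0 s <> None.

Definition active (d : Q -> E -> option Q) (q : Q) (e : E) : Prop :=
  d q e <> None.

Definition is_subautomaton (dG : Q -> E -> option Q) (q0 : Q)
  (QH : {set Q}) (dH : Q -> E -> option Q) : Prop :=
  q0 \in QH /\
  forall q e q', dH q e = Some q' -> [/\ q \in QH, q' \in QH & dG q e = Some q'].

Definition proj (So : {set E}) (s : seq E) : seq E := [seq e <- s | e \in So].

Definition trunc (m : nat) (s : seq E) : seq E := take (size s - m) s.

Definition Theta (So : {set E}) (No : nat) (s w : seq E) : Prop :=
  exists2 m, m <= No & w = proj So (trunc m s).

(* Augmented automaton H^aug_N : states [option Q], [None] = q_dis. *)
Definition aug_step (dH : Q -> E -> option Q) (N : nat)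
  (x : option Q) (e : E) (y : option Q) : Prop :=
  match x with
  | None => False
  | Some q =>
      match dH q e with
      | Some q' => y = Some q'
      | None => y = None /\
          exists s', size s' <= N /\
            exists q'', ext dH q s' = Some q'' /\ active dH q'' e
      end
  end.

Definition aug_lang (dH : Q -> E -> option Q) (N : nat) (q0 : Q) (s : seq E) : Prop :=
  exists y, run (aug_step dH N) (Some q0) s y.

Definition aug_active (dH : Q -> E -> option Q) (N : nat) (q : Q) (e : E) : Prop :=
  exists y, aug_step dH N (Some q) e y.

Variables (n : nat) (So Sc : 'I_n -> {set E}) (No : 'I_n -> nat) (sigma : E).

Definition Ic := {i : 'I_n | sigma \in Sc i}.

Definition vstate := (Q * (Ic -> Q) * nat)%type.

Variables (dH : Q -> E -> option Q) (q0 : Q) (N : nat).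

Definition vinit (x : vstate) : Prop :=
  let '(q, f, d) := x in
  d = 0 /\
  exists t, lang dH q0 t /\ ext dH q0 t = Some q /\
    forall i : Ic, exists si, lang dH q0 si /\ ext dH q0 si = Some (f i) /\
      proj (So (val i)) si = proj (So (val i)) t.

Definition caseD13 (f : Ic -> Q) (d : nat) (e : E) (i : Ic) : Prop :=
  (No (val i) < N - d /\ e \in So (val i)) \/
  (N - d <= No (val i) /\ ~ aug_active dH (No (val i)) (f i) sigma /\ e \in So (val i)).

Definition caseD24 (f : Ic -> Q) (d : nat) (e : E) (i : Ic) : Prop :=
  (No (val i) < N - d /\ e \notin So (val i)) \/
  (N - d <= No (val i) /\ ~ aug_active dH (No (val i)) (f i) sigma /\ e \notin So (val i)).

Definition vstep (x : vstate) (e : E) (y : vstate) : Prop :=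
  let '(q, f, d) := x in
  let '(q', f', d') := y in
  (d.+1 <= N /\ dH q e = Some q' /\ d' = d.+1 /\
   forall i, (caseD13 f d e i -> dH (f i) e = Some (f' i)) /\
             (~ caseD13 f d e i -> f' i = f i))
  \/
  (exists i, caseD24 f d e i /\ dH (f i) e = Some (f' i) /\ q' = q /\ d' = d /\
     forall j, j <> i -> f' j = f j).

Inductive vreach : vstate -> Prop :=
  | vreach_init x : vinit x -> vreach x
  | vreach_step x e y : vreach x -> vstep x e y -> vreach y.

End Automata.

(* Main.v *)
Require Import Defs.
From mathcomp Require Import all_boot.
From Stdlib Require Import Classical.
From mathcomp Require Import zify.
Set Implicit Arguments. Unset Strict Implicit. Unset Printing Implicit Defensive.

Lemma ext_cat (Q E : finType) (d : Q -> E -> option Q) q s1 s2 :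
  ext d q (s1 ++ s2) = if ext d q s1 is Some q' then ext d q' s2 else None.
Proof.
elim: s1 q => [|e s1 IH] q //=.
by case: (d q e).
Qed.

Lemma ext_prefix (Q E : finType) (d : Q -> E -> option Q) q s1 s2 :
  ext d q (s1 ++ s2) <> None -> exists q', ext d q s1 = Some q'.
Proof. by rewrite ext_cat; case: (ext d q s1) => [q'|] // _; exists q'. Qed.

Lemma ext_sub (Q E : finType) (dG dH : Q -> E -> option Q) q0 QH :
  is_subautomaton dG q0 QH dH -> forall s q q', ext dH q s = Some q' -> ext dG q s = Some q'.
Proof.
move=> [_ Hs]; elim => [|e s IH] q q' //=.
case H: (dH q e) => [x|] // Hx.
by have [_ _ ->] := Hs _ _ _ H; apply: IH.
Qed.

Lemma run_consE (X A : Type) (R : X -> A -> X -> Prop) x a s z :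
  run R x (a :: s) z -> exists y, R x a y /\ run R y s z.
Proof.
move=> H; inversion H; subst; by exists y.
Qed.

Lemma run_none (Q E : finType) (dH : Q -> E -> option Q) M a s z :
  ~ run (aug_step dH M) None (a :: s) z.
Proof. move=> H; have [y [Hy _]] := run_consE H; exact: Hy. Qed.

Lemma aug_lang_rcons (Q E : finType) (dH : Q -> E -> option Q) M w a q0 :
  aug_lang dH M q0 (rcons w a) <-> exists x, ext dH q0 w = Some x /\ aug_active dH M x a.
Proof.
rewrite /aug_lang; split.
- elim: w q0 => [|e w IH] q0 /= [y Hr].
  + have [y' [Hy _]] := run_consE Hr. exists q0; split => //; by exists y'.
  + have [y' [Hy Hr']] := run_consE Hr. move: Hy; rewrite /aug_step.
    case: (dH q0 e) => [q'|] .
    * move=> ?; subst; apply: IH; by exists y.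
    * move=> [? _]; subst. case: w Hr' {Hr IH} => [|e' w'] /= /run_none [].
- elim: w q0 => [|e w IH] q0 /= [x [Hx [y Hy]]].
  + case: Hx => ?; subst. exists y. apply: run_cons; first exact: Hy. exact: run_nil.
  + move: Hx; case H: (dH q0 e) => [q'|] // Hx.
    have [z Hz] : exists y, run (aug_step dH M) (Some q') (rcons w a) y.
      apply: IH; exists x; split => //; by exists y.
    exists z; apply: run_cons; last exact: Hz. by rewrite /aug_step H.
Qed.

Lemma proj_split (E : finType) (S : {set E}) w a b :
  proj S w = a ++ b -> exists p r, w = p ++ r /\ proj S p = a /\ proj S r = b.
Proof.
elim: w a => [|e w IH] a /=.
  case: a => // /esym Hb. by exists [::], [::].
case: a => [|e' a] /=.
  move=> Hb; by exists [::], (e :: w).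
case: ifP => He.
- case=> <- Hw. have [p [r [-> [Hp Hr]]]] := IH _ Hw.
  exists (e :: p), r; by rewrite /= He Hp.
- move=> Hw. have [p [r [-> [Hp Hr]]]] := IH (e' :: a) Hw.
  exists (e :: p), r; by rewrite /= He Hp.
Qed.

Lemma proj_cat (E : finType) (S : {set E}) a b : proj S (a ++ b) = proj S a ++ proj S b.
Proof. exact: filter_cat. Qed.

Lemma proj_cons (E : finType) (S : {set E}) e a :
  proj S (e :: a) = if e \in S then e :: proj S a else proj S a.
Proof. by []. Qed.

Lemma proj_nil (E : finType) (S : {set E}) : proj S [::] = [::].
Proof. by []. Qed.

Lemma proj_id (E : finType) (S : {set E}) a : proj S (proj S a) = proj S a.
Proof. exact: filter_id. Qed.

Lemma catl_cancel (T : Type) (a b c : seq T) : a ++ b = a ++ c -> b = c.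
Proof. by elim: a => //= x a IH [] /IH. Qed.

Lemma inv1 (Q E : finType) (dH : Q -> E -> option Q) (q0 : Q) n
  (So Sc : 'I_n -> {set E}) (No : 'I_n -> nat) (sigma : E) (N : nat)
  (x : vstate Q Sc sigma) :
  vreach So No dH q0 N x ->
  let '(q, f, d) := x in d <= N /\ exists t0 u, size u = d /\ ext dH q0 (t0 ++ u) = Some q /\
   forall i : Ic Sc sigma, exists si k, ext dH q0 si = Some (f i) /\ k <= d /\
     proj (So (val i)) si = proj (So (val i)) (t0 ++ take k u) /\
     (k = d \/ (N - k <= No (val i) /\ aug_active dH (No (val i)) (f i) sigma)).
Proof.
elim => {x} [[[q f] d] Hi | [[q f] d] e [[q' f'] d'] _ IH Hs].
- case: Hi => -> [t [_ [Ht Hf]]]; split => //.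
  exists t, [::]; split => //; rewrite cats0; split => // i.
  have [si [_ [Hsi Hp]]] := Hf i.
  exists si, 0; split => //; split => //; split; [by rewrite /= ?cats0 | by left].
- case: IH => Hd [t0 [u [Hu [Hq Hf]]]].
  case: Hs => [[Hd1 [Hqe [-> Hff]]] | [i [H24 [Hfi [-> [-> Hoth]]]]]].
  + split => //. exists t0, (rcons u e); split; first by rewrite size_rcons Hu.
    split. by rewrite -cats1 catA ext_cat Hq /= Hqe.
    move=> i; have [si [k [Hsi [Hk [Hp Hfr]]]]] := Hf i.
    have [H13 Hn13] := Hff i.
    have frz13 : N - k <= No (val i) /\ aug_active dH (No (val i)) (f i) sigma ->
        ~ caseD13 So No dH N f d e i.
      move=> [Hk1 Ha] [[Hlt _]|[_ [Hna _]]] //.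
      have : N - d <= N - k by apply: leq_sub2l.
      move=> Hle; have := leq_trans Hle Hk1; by rewrite leqNgt Hlt.
    case: (classic (caseD13 So No dH N f d e i)) => C.
    * have Hkd : k = d by case: Hfr => // /frz13.
      have Heo : e \in So (val i) by case: C => [[_ ->]|[_ [_ ->]]].
      subst k.
      exists (rcons si e), d.+1; split.
        by rewrite -cats1 ext_cat Hsi /= (H13 C).
      split => //; split; last by left.
      rewrite -cats1 proj_cat Hp -Hu take_size.
      have -> : take (size u).+1 (rcons u e) = rcons u e.
        by rewrite take_oversize // size_rcons.
      by rewrite -cats1 ?catA !proj_cat proj_cons proj_nil Heo ?catA.
    * have Hfe := Hn13 C.
      case: (boolP (e \in So (val i))) => Heo.
      -- exists si, k; rewrite Hfe; split => //; split; first exact: leqW.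
         split. by rewrite -cats1 takel_cat // Hu.
         right. case: Hfr => [->|]; last by [].
         have Hnl : ~~ (No (val i) < N - d).
           apply/negP => Hl; apply: C; by left.
         rewrite -leqNgt in Hnl; split => //.
         apply: NNPP => Hna; apply: C; by right.
      -- case: Hfr => [Hkd|Hfr].
         ++ subst k. exists si, d.+1; rewrite Hfe; split => //; split => //.
            split; last by left.
            rewrite Hp -Hu take_size take_oversize ?size_rcons //.
            by rewrite -cats1 catA !proj_cat proj_cons proj_nil (negbTE Heo) cats0.
         ++ exists si, k; rewrite Hfe; split => //; split; first exact: leqW.
            split. by rewrite -cats1 takel_cat // Hu.
            by right.
  + split => //. exists t0, u; split => //; split => //.
    move=> j; have [si [k [Hsi [Hk [Hp Hfr]]]]] := Hf j.
    case: (eqVneq j i) => [Hji|Hji]; last first.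
      rewrite (Hoth j (elimN eqP Hji)). by exists si, k.
    subst j.
    have Heo : e \notin So (val i) by case: H24 => [[_ ->]|[_ [_ ->]]].
    have Hkd : k = d.
      case: Hfr => // [[Hk1 Ha]]. exfalso.
      have Hle : N - d <= N - k by apply: leq_sub2l.
      case: H24 => [[Hlt _]|[_ [Hna _]]] //.
      have := leq_trans Hle Hk1; by rewrite leqNgt Hlt.
    exists (rcons si e), k; split.
      by rewrite -cats1 ext_cat Hsi /= Hfi.
    split => //; split; last by left.
    by rewrite -cats1 proj_cat proj_cons proj_nil (negbTE Heo) cats0.
Qed.

Lemma dir1 (Q E : finType) (dG : Q -> E -> option Q) (q0 : Q)
  (QH : {set Q}) (dH : Q -> E -> option Q)
  (n : nat) (So Sc : 'I_n -> {set E}) (No : 'I_n -> nat) (sigma : E) (N : nat) :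
  is_subautomaton dG q0 QH dH ->
  (forall s : seq E, lang dH q0 s -> N <= size s ->
     lang dG q0 (rcons s sigma) -> ~ lang dH q0 (rcons s sigma) ->
     forall si : Ic Sc sigma -> seq E,
       (forall i, Theta (So (val i)) (No (val i)) s (proj (So (val i)) (si i))) ->
       exists i, ~ aug_lang dH (No (val i)) q0 (rcons (si i) sigma)) ->
  ~ (exists (q : Q) (f : Ic Sc sigma -> Q),
       vreach So No dH q0 N (q, f, N) /\
       active dG q sigma /\ ~ active dH q sigma /\
       forall i, aug_active dH (No (val i)) (f i) sigma).
Proof.
move=> Hsub HA [q [f [Hr [HG [HnH Haug]]]]].
have [_ [t0 [u [Hu [Hq Hf]]]]] := inv1 Hr.
have [sk Hsk] := fin_all_exists Hf.
have [kf Hkf] := fin_all_exists Hsk.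
have HnH' : dH q sigma = None by apply: NNPP => H; apply: HnH; exact: H.
case: (HA (t0 ++ u) _ _ _ _ sk _) => [||||| i Hi].
- by rewrite /lang Hq.
- by rewrite size_cat Hu leq_addl.
- rewrite /lang -cats1 ext_cat (ext_sub Hsub Hq) /=; rewrite /active in HG; by case: (dG q sigma) HG.
- by rewrite /lang -cats1 ext_cat Hq /= HnH'.
- move=> i; have [Hs [Hk [Hp Hfr]]] := Hkf i.
  exists (N - kf i).
    case: Hfr => [->|[]//]; by rewrite subnn.
  rewrite Hp /trunc size_cat Hu.
  have -> : size t0 + N - (N - kf i) = size t0 + kf i.
    lia.
  by rewrite takeD take_size_cat // drop_size_cat.
- apply: Hi; apply/aug_lang_rcons; exists (f i).
  by have [-> _] := Hkf i.
Qed.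

Lemma dir2 (Q E : finType) (dG : Q -> E -> option Q) (q0 : Q)
  (QH : {set Q}) (dH : Q -> E -> option Q)
  (n : nat) (So Sc : 'I_n -> {set E}) (No : 'I_n -> nat) (sigma : E) (N : nat) :
  (forall i : Ic Sc sigma, No (val i) <= N) ->
  is_subautomaton dG q0 QH dH ->
  ~ (exists (q : Q) (f : Ic Sc sigma -> Q),
       vreach So No dH q0 N (q, f, N) /\
       active dG q sigma /\ ~ active dH q sigma /\
       forall i, aug_active dH (No (val i)) (f i) sigma) ->
  (forall s : seq E, lang dH q0 s -> N <= size s ->
     lang dG q0 (rcons s sigma) -> ~ lang dH q0 (rcons s sigma) ->
     forall si : Ic Sc sigma -> seq E,
       (forall i, Theta (So (val i)) (No (val i)) s (proj (So (val i)) (si i))) ->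
       exists i, ~ aug_lang dH (No (val i)) q0 (rcons (si i) sigma)).
Proof.
move=> HN Hsub HB s Hs HNs HGs HHs si Hth.
apply: NNPP => Hno.
have Haug : forall i, exists x, ext dH q0 (si i) = Some x /\ aug_active dH (No (val i)) x sigma.
  move=> i; apply/aug_lang_rcons; apply: NNPP => H; apply: Hno; by exists i.
pose t0 := take (size s - N) s.
pose u := drop (size s - N) s.
have Hs_eq : s = t0 ++ u by rewrite cat_take_drop.
have Hu : size u = N by rewrite size_drop; lia.
have Hm : forall i, exists m, m <= No (val i) /\
    proj (So (val i)) (si i) = proj (So (val i)) (t0 ++ take (N - m) u).
  move=> i; move: (Hth i); rewrite /Theta => -[m Hm1 Hm2]. exists m; split => //.
  rewrite Hm2 /trunc.
  have -> : size s - m = (size s - N) + (N - m) by have := HN i; lia.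
  by rewrite takeD.
have [mf Hmf] := fin_all_exists Hm.
pose frz (i : Ic Sc sigma) x d := N - d <= No (val i) /\ aug_active dH (No (val i)) x sigma.
pose W (i : Ic Sc sigma) x d := frz i x d \/ exists p r, si i = p ++ r /\ ext dH q0 p = Some x /\
   proj (So (val i)) p = proj (So (val i)) (t0 ++ take d u).
pose J (i : Ic Sc sigma) x d := frz i x d \/ exists p r, si i = p ++ r /\ ext dH q0 p = Some x /\
   proj (So (val i)) p = proj (So (val i)) (t0 ++ take d u) /\
   (r = [::] \/ exists e r', r = e :: r' /\ e \in So (val i)).
have JW : forall i x d, J i x d -> W i x d.
  move=> i x d [H|[p [r [H1 [H2 [H3 _]]]]]]; [by left | right; by exists p, r].
have D13 : forall f d e i, caseD13 So No dH N f d e i <-> e \in So (val i) /\ ~ frz i (f i) d.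
  move=> f d e i; rewrite /caseD13 /frz; split.
  - case=> [[Hl He]|[Hl [Ha He]]]; split => //; move=> [Hl' Ha'] //.
    lia.
  - move=> [He Hf]; case: (leqP (N - d) (No (val i))) => Hl.
    + right; split => //; split => // Ha; by apply: Hf.
    + by left.
have D24 : forall f d e i, caseD24 So No dH N f d e i <-> e \notin So (val i) /\ ~ frz i (f i) d.
  move=> f d e i; rewrite /caseD24 /frz; split.
  - case=> [[Hl He]|[Hl [Ha He]]]; split => //; move=> [Hl' Ha'] //.
    lia.
  - move=> [He Hf]; case: (leqP (N - d) (No (val i))) => Hl.
    + right; split => //; split => // Ha; by apply: Hf.
    + by left.
have F1 : forall i x d, J i x d -> ~ frz i x d -> d < N - mf i.
  move=> i x d [//|[p [r [Hw [Hx [Hp Hr]]]]]] Hnf.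
  rewrite ltnNge; apply/negP => Hle; apply: Hnf.
  have [Hm1 Hm2] := Hmf i.
  have Htk : take d u = take (N - mf i) u ++ take (d - (N - mf i)) (drop (N - mf i) u).
    by rewrite -takeD subnKC.
  have Hr0 : proj (So (val i)) r = [::].
    have := congr1 size Hm2.
    rewrite Hw proj_cat Hp Htk !proj_cat !size_cat.
    move=> Hsz; apply/eqP; rewrite -size_eq0; apply/eqP; move: Hsz.
    set a := size (proj _ t0); set b := size (proj _ (take (N - mf i) u)).
    set c := size (proj _ (take (d - _) _)); set z := size (proj _ r).
    clearbody a b c z; lia.
  have Hr1 : r = [::].
    case: Hr => // [[e [r' [Hr' He]]]]; by rewrite Hr' proj_cons He in Hr0.
  rewrite Hr1 cats0 in Hw.
  have [y [Hy Ha]] := Haug i; rewrite Hw Hx in Hy; case: Hy => <- in Ha.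
  split => //; lia.
have Hext : forall i p r, si i = p ++ r -> exists z, ext dH q0 (si i) = Some z.
  move=> i p r _; have [z [Hz _]] := Haug i; by exists z.
have F2 : forall i x d, J i x d -> ~ frz i x d -> nth sigma u d \in So (val i) ->
    exists y, dH x (nth sigma u d) = Some y /\ W i y d.+1.
  move=> i x d HJ Hnf He.
  have Hlt := F1 _ _ _ HJ Hnf.
  case: HJ => [//|[p [r [Hw [Hx [Hp Hr]]]]]].
  have [Hm1 Hm2] := Hmf i.
  have Hd : d < size u by rewrite Hu; lia.
  have HA : proj (So (val i)) (si i) = proj (So (val i)) (t0 ++ take d u) ++
      nth sigma u d :: proj (So (val i)) (take (N - mf i - d.+1) (drop d.+1 u)).
    have Hk : N - mf i = d + (N - mf i - d.+1).+1 by lia.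
    rewrite Hm2 {1}Hk takeD (drop_nth sigma Hd) take_cons.
    by rewrite catA !proj_cat proj_cons He -!catA.
  rewrite Hw proj_cat Hp in HA.
  have {}HA := catl_cancel HA.
  case: Hr => [Hr|[e [r' [Hr' He']]]].
    by rewrite Hr in HA.
  rewrite Hr' proj_cons He' in HA; case: HA => Hee _; subst e.
  have [z [Hz _]] := Haug i; rewrite Hw Hr' ext_cat Hx /= in Hz.
  case Hy: (dH x (nth sigma u d)) Hz => [y|] // _.
  exists y; split => //; right; exists (rcons p (nth sigma u d)), r'.
  split; first by rewrite Hw Hr' cat_rcons.
  split; first by rewrite -cats1 ext_cat Hx /= Hy.
  by rewrite (take_nth sigma Hd) -!cats1 catA !proj_cat Hp !proj_cat.
have F3 : forall i x d, J i x d -> d < N -> ~ (nth sigma u d \in So (val i) /\ ~ frz i x d) ->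
    W i x d.+1.
  move=> i x d HJ Hd Hn.
  case: (classic (frz i x d)) => Hf.
    left; case: Hf => H1 H2; split => //; lia.
  have He : nth sigma u d \notin So (val i).
    apply/negP => He; by apply: Hn.
  case: HJ => [//|[p [r [Hw [Hx [Hp Hr]]]]]].
  right; exists p, r; split => //; split => //.
  have Hd' : d < size u by rewrite Hu.
  by rewrite Hp (take_nth sigma Hd') -cats1 catA [in RHS]proj_cat proj_cons (negbTE He) proj_nil cats0.
have sat1 : forall i q f d, vreach So No dH q0 N (q, f, d) -> W i (f i) d ->
    exists f', vreach So No dH q0 N (q, f', d) /\ (forall j, j <> i -> f' j = f j) /\ J i (f' i) d.
  move=> i q f d Hr [Hfz|[p [r [Hw [Hx Hp]]]]].
    exists f; split => //; split => //; by left.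
  elim: r p f Hr Hw Hx Hp => [|e r IH] p f Hr Hw Hx Hp.
    exists f; split => //; split => //; right; exists p, [::]; split => //; split => //; split => //; by left.
  case: (classic (frz i (f i) d)) => Hfz.
    exists f; split => //; split => //; by left.
  case: (boolP (e \in So (val i))) => He.
    exists f; split => //; split => //; right; exists p, (e :: r); split => //; split => //; split => //.
    right; by exists e, r.
  have [z [Hz _]] := Haug i; rewrite Hw ext_cat Hx /= in Hz.
  case Hy: (dH (f i) e) Hz => [y|] // _.
  pose f1 := fun j => if j == i then y else f j.
  have Hst : vstep So No dH N (q, f, d) e (q, f1, d).
    right; exists i; split; first by apply/D24.
    split; first by rewrite /f1 eqxx.
    split => //; split => // j Hj; rewrite /f1; case: eqP => //.
  have Hr1 := vreach_step Hr Hst.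
  have Hw1 : si i = rcons p e ++ r by rewrite Hw cat_rcons.
  have Hx1 : ext dH q0 (rcons p e) = Some (f1 i) by rewrite /f1 eqxx -cats1 ext_cat Hx /= Hy.
  have Hp1 : proj (So (val i)) (rcons p e) = proj (So (val i)) (t0 ++ take d u).
    by rewrite -cats1 proj_cat Hp proj_cons (negbTE He) proj_nil cats0.
  have [f' [Hr' [Hoth HJ]]] := IH (rcons p e) f1 Hr1 Hw1 Hx1 Hp1.
  exists f'; split => //; split => // j Hj; rewrite Hoth // /f1; case: eqP => //.
have satAll : forall (l : seq (Ic Sc sigma)) q f d, vreach So No dH q0 N (q, f, d) ->
    (forall i, W i (f i) d) ->
    exists f', vreach So No dH q0 N (q, f', d) /\ (forall i, W i (f' i) d) /\
       (forall i, i \in l -> J i (f' i) d).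
  elim => [|a l IH] q f d Hr HW.
    by exists f.
  have [f1 [Hr1 [HW1 HJ1]]] := IH q f d Hr HW.
  have [f2 [Hr2 [Hoth HJ2]]] := sat1 a q f1 d Hr1 (HW1 a).
  exists f2; split => //; split.
    move=> i; case: (eqVneq i a) => [->|Hia]; first exact: JW.
    by rewrite Hoth //; apply/eqP.
  move=> i; rewrite inE; case: (eqVneq i a) => [->|Hia] //= Hil.
  by rewrite Hoth; [apply: HJ1|apply/eqP].
have main : forall d, d <= N -> exists q f, ext dH q0 (t0 ++ take d u) = Some q /\
    vreach So No dH q0 N (q, f, d) /\ forall i, J i (f i) d.
  elim => [_|d IH Hd].
  - have [q Hq] : exists q, ext dH q0 t0 = Some q.
      apply: (@ext_prefix _ _ _ _ _ u); by rewrite -Hs_eq.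
    have Hi : forall i : Ic Sc sigma, exists y, (exists p, lang dH q0 p /\ ext dH q0 p = Some y /\
        proj (So (val i)) p = proj (So (val i)) t0) /\ W i y 0.
      move=> i; have [_ Hm2] := Hmf i.
      rewrite proj_cat in Hm2.
      have [p [r [Hw [Hp _]]]] := proj_split Hm2.
      have [z [Hz _]] := Haug i.
      have [y Hy] : exists y, ext dH q0 p = Some y.
        apply: (@ext_prefix _ _ _ _ _ r); by rewrite -Hw Hz.
      exists y; split.
        exists p; split; first by rewrite /lang Hy.
        by split.
      right; exists p, r; split => //; split => //. by rewrite take0 cats0.
    have [f0 Hf0] := fin_all_exists Hi.
    have Hr0 : vreach So No dH q0 N (q, f0, 0).
      apply: vreach_init; split => //; exists t0; split; first by rewrite /lang Hq.
      split => // i; have [[p [Hp1 [Hp2 Hp3]]] _] := Hf0 i; by exists p.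
    have [f' [Hr' [_ HJ]]] := satAll (enum (@predT (Ic Sc sigma))) q f0 0 Hr0 (fun i => proj2 (Hf0 i)).
    exists q, f'; split; first by rewrite take0 cats0.
    split => // i; apply: HJ; by rewrite mem_enum.
  - have [q [f [Hq [Hr HJ]]]] := IH (ltnW Hd).
    have Hdu : d < size u by rewrite Hu.
    have [q' Hq'] : exists q', ext dH q0 (t0 ++ take d.+1 u) = Some q'.
      apply: (@ext_prefix _ _ _ _ _ (drop d.+1 u)); by rewrite -catA cat_take_drop -Hs_eq.
    have Hqe : dH q (nth sigma u d) = Some q'.
      move: Hq'; rewrite (take_nth sigma Hdu) -cats1 catA ext_cat Hq /=.
      by case: (dH q (nth sigma u d)).
    have Hi : forall i, exists y, (caseD13 So No dH N f d (nth sigma u d) i -> dH (f i) (nth sigma u d) = Some y) /\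
        (~ caseD13 So No dH N f d (nth sigma u d) i -> y = f i) /\ W i y d.+1.
      move=> i; case: (classic (caseD13 So No dH N f d (nth sigma u d) i)) => C.
      + have [He Hnf] := (D13 _ _ _ _).1 C.
        have [y [Hy HW]] := F2 i (f i) d (HJ i) Hnf He.
        by exists y.
      + exists (f i); split => //; split => //.
        apply: (F3 i (f i) d (HJ i)) => // H; apply: C; exact/D13.
    have [f1 Hf1] := fin_all_exists Hi.
    have Hst : vstep So No dH N (q, f, d) (nth sigma u d) (q', f1, d.+1).
      left; split => //; split => //; split => // i.
      by have [H1 [H2 _]] := Hf1 i; split.
    have Hr1 := vreach_step Hr Hst.
    have [f' [Hr' [_ HJ']]] := satAll (enum (@predT (Ic Sc sigma))) q' f1 d.+1 Hr1 (fun i => proj2 (proj2 (Hf1 i))).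
    exists q', f'; split => //; split => // i; apply: HJ'; by rewrite mem_enum.
have [q [f [Hq [Hr HJ]]]] := main N (leqnn N).
rewrite -Hu take_size -Hs_eq in Hq.
apply: HB; exists q, f; split => //; split.
  move: HGs; rewrite /lang /active -cats1 ext_cat (ext_sub Hsub Hq) /=.
  by case: (dG q sigma).
split.
  move=> H; apply: HHs; rewrite /lang -cats1 ext_cat Hq /=.
  by move: H; rewrite /active; case: (dH q sigma).
move=> i; case: (classic (frz i (f i) N)) => [[_ //]|Hnf].
have := F1 i (f i) N (HJ i) Hnf; lia.
Qed.

Theorem proposition2 (Q E : finType) (dG : Q -> E -> option Q) (q0 : Q)
  (QH : {set Q}) (dH : Q -> E -> option Q)
  (n : nat) (So Sc : 'I_n -> {set E}) (No : 'I_n -> nat) (sigma : E) :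
  is_subautomaton dG q0 QH dH ->
  (exists i : 'I_n, sigma \in Sc i) ->
  let N := \max_(i : Ic Sc sigma) No (val i) in
  (forall s : seq E, lang dH q0 s -> N <= size s ->
     lang dG q0 (rcons s sigma) -> ~ lang dH q0 (rcons s sigma) ->
     forall si : Ic Sc sigma -> seq E,
       (forall i, Theta (So (val i)) (No (val i)) s (proj (So (val i)) (si i))) ->
       exists i, ~ aug_lang dH (No (val i)) q0 (rcons (si i) sigma))
  <->
  ~ (exists (q : Q) (f : Ic Sc sigma -> Q),
       vreach So No dH q0 N (q, f, N) /\
       active dG q sigma /\ ~ active dH q sigma /\
       forall i, aug_active dH (No (val i)) (f i) sigma).
Proof.
move=> Hsub Hex N.
have HN : forall i : Ic Sc sigma, No (val i) <= N.
  move=> i; exact: (@leq_bigmax _ (fun i : Ic Sc sigma => No (val i)) i).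
split.
- move=> HA; exact: (dir1 Hsub HA).
- move=> HB; exact: (dir2 HN Hsub HB).
Qed.
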